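(* Let $\tau,\nu$ be complex $n\times n$ matrices with $T=\sum_{j,k}\tau_{j,k}A_j^\dagger A_k$ and $V=\sum_{l,m}\nu_{l,m}N_lN_m$ Hermitian, set $H_0=V$, $H_1=T$, $\mu^0=\nu$, $\mu^1=\tau$, $H^0_{jk}=N_jN_k$, $H^1_{jk}=A_j^\dagger A_k$, and let $\boldsymbol\gamma=(\gamma_1,\dots,\gamma_{p+1})\in\{0,1\}^{p+1}$ with $|\boldsymbol\gamma|=\sum_q\gamma_q$. For each choice of index pairs $(j_q,k_q)$, $q=1,\dots,p+1$, fix an expansion of the nested commutator $[H^{\gamma_{p+1}}_{j_{p+1}k_{p+1}},\ldots[H^{\gamma_2}_{j_2k_2},H^{\gamma_1}_{j_1k_1}]]$ as a finite sum of terms (''fermionic paths'') $P=(-1)^aY_1\cdots Y_r$, $a\in\{0,1\}$, each $Y_i$ one of $A_j^\dagger,A_k,N_l$ (the empty sum if the nested commutator is zero); write $P\rhd(H^{\gamma_{p+1}}_{j_{p+1}k_{p+1}},\ldots,H^{\gamma_1}_{j_1k_1})$ for the terms of this expansion. Then for $0\le\eta\le n$, $$\big\|[H_{\gamma_{p+1}},\cdots[H_{\gamma_2},H_{\gamma_1}]]\big\|_{\eta}\le\|\tau\|_{\max}^{|\boldsymbol\gamma|}\|\nu\|_{\max}^{p+1-|\boldsymbol\gamma|}\max_{\mathbf{c}_\eta}\deg(\mathbf{c}_\eta),$$ where $\mathbf{c}_\eta$ ranges over configurations in $\{0,1\}^n$ with exactly $\eta$ ones and $$\deg(\mathbf{c}_\eta)=\sum_{\langle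 j_{p+1},k_{p+1}\rangle}\cdots\sum_{\langle j_1,k_1\rangle}\ \sum_{P\rhd(H^{\gamma_{p+1}}_{j_{p+1}k_{p+1}},\ldots,H^{\gamma_1}_{j_1k_1})}\frac12\left(\|P|\mathbf{c}_\eta\rangle\|+\|P^\dagger|\mathbf{c}_\eta\rangle\|\right),$$ with each $\sum_{\langle j_q,k_q\rangle}$ ranging over the pairs $(j_q,k_q)$ such that $\mu^{\gamma_q}_{j_q,k_q}\neq0$.
   Context: Fermionic Fock space on $n$ spin orbitals: the $2^n$-dimensional Hilbert space with orthonormal computational basis $|\mathbf{c}\rangle=|c_0,\dots,c_{n-1}\rangle$. Creation operators: $A_j^\dagger|\dots,0_j,\dots\rangle=(-1)^{\sum_{k<j}c_k}|\dots,1_j,\dots\rangle$, $A_j^\dagger|\dots,1_j,\dots\rangle=0$; annihilation operators $A_j=(A_j^\dagger)^\dagger$; $N_l=A_l^\dagger A_l$, $N=\sum_lN_l$. The $\eta$-electron subspace is spanned by $|\mathbf{c}\rangle$ with $\sum_jc_j=\eta$; $\eta$-electron states are unit vectors in it. For $X$ commuting with $N$, $\|X\|_\eta=\max|\langle\phi_\eta|X|\psi_\eta\rangle|$ over $\eta$-electron states. $\|\cdot\|_{\max}$ is the largest absolute value of a matrix entry. *)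

(* Defs.v *)
(* Fermionic Fock space on n spin orbitals, operators as
   square matrices indexed (via enum_rank) by configurations c : 'I_n -> bool. *)
From HB Require Import structures.
From mathcomp Require Import all_boot all_order all_algebra.
Set Implicit Arguments. Unset Strict Implicit. Unset Printing Implicit Defensive.
Import Order.TTheory GRing.Theory Num.Theory.
Local Open Scope ring_scope.

Section Fock.
Variable C : numClosedFieldType.
Variable n : nat.

Definition conf := {ffun 'I_n -> bool}.
Definition dim := #|{: conf}|.
Definition op := 'M[C]_dim.
Definition vec := 'cV[C]_dim.

Definition nelec (c : conf) : nat := (\sum_(k < n) (c k : nat))%N.

Definition adj m1 m2 (A : 'M[C]_(m1, m2)) : 'M[C]_(m2, m1) := (map_mx Num.conj A)^T.

Definition setc (c : conf) (j : 'I_n) (b : bool) : conf :=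
  [ffun k => if k == j then b else c k].

Definition cre (j : 'I_n) : op :=
  \matrix_(r, s)
    (let c := (enum_val s : conf) in let c' := (enum_val r : conf) in
     if (~~ c j) && (c' == setc c j true)
     then (-1) ^+ (\sum_(k < n | (k < j)%N) (c k : nat))%N else 0).
Definition ann (j : 'I_n) : op := adj (cre j).
Definition numop (l : 'I_n) : op := cre l *m ann l.

Definition ket (c : conf) : vec := \col_i (if enum_val i == c then 1 else 0).

Definition vnorm (v : vec) : C := sqrtC (\sum_i `|v i 0| ^+ 2).
Definition matel (phi : vec) (X : op) (psi : vec) : C := (adj phi *m X *m psi) 0 0.

Definition estate (eta : nat) (v : vec) : Prop :=
  (forall i, nelec (enum_val i) != eta -> v i 0 = 0) /\ vnorm v = 1.

Definition maxnorm m1 m2 (A : 'M[C]_(m1, m2)) : C :=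
  \big[Num.max/0]_(i < m1) \big[Num.max/0]_(j < m2) `|A i j|.

Definition Tham (tau : 'M[C]_n) : op :=
  \sum_(j < n) \sum_(k < n) tau j k *: (cre j *m ann k).
Definition Vham (nu : 'M[C]_n) : op :=
  \sum_(l < n) \sum_(m < n) nu l m *: (numop l *m numop m).

(* gamma = false <-> 0 (H_0 = V, mu^0 = nu) ; gamma = true <-> 1 (H_1 = T, mu^1 = tau) *)
Definition Hop (tau nu : 'M[C]_n) (g : bool) : op := if g then Tham tau else Vham nu.
Definition mu (tau nu : 'M[C]_n) (g : bool) : 'M[C]_n := if g then tau else nu.
Definition Hjk (g : bool) (jk : 'I_n * 'I_n) : op :=
  if g then cre jk.1 *m ann jk.2 else numop jk.1 *m numop jk.2.

(* nested commutator [X_p, ... [X_1, X_0]] (X_0 innermost) *)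
Fixpoint nest_nat (X : nat -> op) (q : nat) : op :=
  match q with
  | 0 => X 0%N
  | q'.+1 => X q *m nest_nat X q' - nest_nat X q' *m X q
  end.
Definition nestc p (X : 'I_p.+1 -> op) : op := nest_nat (fun q => X (inord q)) p.

Inductive letter := Cr of 'I_n | An of 'I_n | Nm of 'I_n.
Definition letter_op (y : letter) : op :=
  match y with Cr j => cre j | An k => ann k | Nm l => numop l end.
Definition fermpath := (bool * seq letter)%type.
Definition pathop (P : fermpath) : op :=
  (-1) ^+ P.1 *: foldr (fun y M => letter_op y *m M) 1%:M P.2.

Definition degc (tau nu : 'M[C]_n) p (gamma : 'I_p.+1 -> bool)
  (E : {ffun 'I_p.+1 -> 'I_n * 'I_n} -> seq fermpath) (c : conf) : C :=
  \sum_(js : {ffun 'I_p.+1 -> 'I_n * 'I_n} |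
         [forall q, mu tau nu (gamma q) (js q).1 (js q).2 != 0])
    \sum_(P <- E js) 2^-1 * (vnorm (pathop P *m ket c) + vnorm (adj (pathop P) *m ket c)).

End Fock.

(* Main.v *)
Require Import Defs.
From HB Require Import structures.
From mathcomp Require Import all_boot all_order all_algebra ring.
Set Implicit Arguments. Unset Strict Implicit. Unset Printing Implicit Defensive.
Import Order.TTheory GRing.Theory Num.Theory.
Local Open Scope ring_scope.

Section Aux.
Variable C : numClosedFieldType.
Variable n : nat.
Local Notation op := (op C n).
Local Notation vec := (vec C n).
Local Notation conf := (conf n).

Lemma adjE m1 m2 (A : 'M[C]_(m1, m2)) i j : adj A i j = (A j i)^*.
Proof. by rewrite /adj !mxE. Qed.

Lemma adjK m1 m2 (A : 'M[C]_(m1, m2)) : adj (adj A) = A.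
Proof. by apply/matrixP => i j; rewrite !adjE conjCK. Qed.

Lemma adj_mul m1 m2 m3 (A : 'M[C]_(m1, m2)) (B : 'M[C]_(m2, m3)) :
  adj (A *m B) = adj B *m adj A.
Proof.
apply/matrixP => i j; rewrite adjE !mxE rmorph_sum; apply: eq_bigr => k _.
by rewrite rmorphM !adjE mulrC.
Qed.

Lemma adj_sub m1 m2 (A B : 'M[C]_(m1, m2)) : adj (A - B) = adj A - adj B.
Proof. by apply/matrixP => i j; rewrite /adj !mxE rmorphB. Qed.

Lemma adj_scale m1 m2 a (A : 'M[C]_(m1, m2)) : adj (a *: A) = a^* *: adj A.
Proof. by apply/matrixP => i j; rewrite /adj !mxE rmorphM. Qed.

Lemma nest_adj (X : nat -> op) p :
  (forall q, adj (X q) = X q) -> adj (nest_nat X p) = (-1) ^+ p *: nest_nat X p.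
Proof.
move=> hX; elim: p => [|p IH] /=; first by rewrite hX expr0 scale1r.
rewrite adj_sub !adj_mul IH hX -scalemxAl -scalemxAr exprS mulN1r scaleNr.
by rewrite -scalerBr -scalerN opprB.
Qed.

Lemma eq_nest (X Y : nat -> op) p :
  (forall q, (q <= p)%N -> X q = Y q) -> nest_nat X p = nest_nat Y p.
Proof.
elim: p => [|p IH] h /=; first by rewrite h.
rewrite IH ?h // => q hq; apply: h; exact: leqW.
Qed.

Lemma ketE (c : conf) i : ket C c i 0 = (enum_val i == c)%:R.
Proof. by rewrite /ket mxE; case: eqP. Qed.

Lemma mul_ket m (A : 'M[C]_(m, Defs.dim n)) (c : conf) i :
  (A *m ket C c) i 0 = A i (enum_rank c).
Proof.
rewrite mxE (bigD1 (enum_rank c)) //= ketE enum_rankK eqxx mulr1 big1 ?addr0 //.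
move=> k hk; rewrite ketE; case: eqP => [e|]; last by rewrite mulr0.
by move: hk; rewrite -e enum_valK eqxx.
Qed.


Definition colm m1 m2 (M : 'M[C]_(m1, m2)) :=
  forall s r r', M r s != 0 -> M r' s != 0 -> r = r'.
Definition rowm m1 m2 (M : 'M[C]_(m1, m2)) :=
  forall r s s', M r s != 0 -> M r s' != 0 -> s = s'.

Lemma sum_neq0 (I : finType) (F : I -> C) : \sum_i F i != 0 -> exists i, F i != 0.
Proof.
case: (pickP (fun i => F i != 0)) => [i hi|h]; first by exists i.
by rewrite big1 ?eqxx // => i _; move/negbT: (h i); rewrite negbK => /eqP.
Qed.

Lemma colm_mul m1 m2 m3 (A : 'M[C]_(m1, m2)) (B : 'M[C]_(m2, m3)) :
  colm A -> colm B -> colm (A *m B).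
Proof.
move=> hA hB s r r'; rewrite !mxE => /sum_neq0 [k hk] /sum_neq0 [k' hk'].
move: hk hk'; rewrite !mulf_eq0 !negb_or => /andP [a1 b1] /andP [a2 b2].
have e := hB _ _ _ b1 b2; subst k'; exact: hA a1 a2.
Qed.

Lemma rowm_mul m1 m2 m3 (A : 'M[C]_(m1, m2)) (B : 'M[C]_(m2, m3)) :
  rowm A -> rowm B -> rowm (A *m B).
Proof.
move=> hA hB r s s'; rewrite !mxE => /sum_neq0 [k hk] /sum_neq0 [k' hk'].
move: hk hk'; rewrite !mulf_eq0 !negb_or => /andP [a1 b1] /andP [a2 b2].
have e := hA _ _ _ a1 a2; subst k'; exact: hB b1 b2.
Qed.

Lemma colm_adj m1 m2 (A : 'M[C]_(m1, m2)) : rowm A -> colm (adj A).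
Proof. by move=> h s r r'; rewrite !adjE !conjC_eq0; apply: h. Qed.

Lemma rowm_adj m1 m2 (A : 'M[C]_(m1, m2)) : colm A -> rowm (adj A).
Proof. by move=> h s r r'; rewrite !adjE !conjC_eq0; apply: h. Qed.

Lemma colm_scale m1 m2 a (A : 'M[C]_(m1, m2)) : colm A -> colm (a *: A).
Proof.
move=> h s r r'; rewrite !mxE !mulf_eq0 !negb_or => /andP [_ h1] /andP [_ h2].
exact: h h1 h2.
Qed.

Lemma rowm_scale m1 m2 a (A : 'M[C]_(m1, m2)) : rowm A -> rowm (a *: A).
Proof.
move=> h s r r'; rewrite !mxE !mulf_eq0 !negb_or => /andP [_ h1] /andP [_ h2].
exact: h h1 h2.
Qed.

Lemma colm1 m : colm (1%:M : 'M[C]_m).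
Proof.
move=> s r r'; rewrite !mxE => h1 h2.
have /eqP e1 : r == s by apply: contraNT h1 => /negbTE ->.
have /eqP e2 : r' == s by apply: contraNT h2 => /negbTE ->.
by rewrite e1 e2.
Qed.

Lemma rowm1 m : rowm (1%:M : 'M[C]_m).
Proof.
move=> s r r'; rewrite !mxE => h1 h2.
have /eqP e1 : s == r by apply: contraNT h1 => /negbTE ->.
have /eqP e2 : s == r' by apply: contraNT h2 => /negbTE ->.
by rewrite -e1 -e2.
Qed.

Lemma setc_inj (c1 c2 : conf) (j : 'I_n) :
  ~~ c1 j -> ~~ c2 j -> setc c1 j true = setc c2 j true -> c1 = c2.
Proof.
move=> h1 h2 e; apply/ffunP => k.
have := congr1 (fun f : conf => f k) e; rewrite !ffunE.
case: eqP => [->|] //; by move: h1 h2; case: (c1 j); case: (c2 j).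
Qed.

Lemma colm_cre (j : 'I_n) : colm (cre C j).
Proof.
move=> s r r'; rewrite !mxE /=.
case: ifP => [/andP [_ /eqP e1]|]; last by rewrite eqxx.
case: ifP => [/andP [_ /eqP e2]|]; last by rewrite eqxx.
by move=> _ _; apply: enum_val_inj; rewrite e1 e2.
Qed.

Lemma rowm_cre (j : 'I_n) : rowm (cre C j).
Proof.
move=> r s s'; rewrite !mxE /=.
case: ifP => [/andP [h1 /eqP e1]|]; last by rewrite eqxx.
case: ifP => [/andP [h2 /eqP e2]|]; last by rewrite eqxx.
move=> _ _; apply: enum_val_inj; apply: (setc_inj h1 h2); by rewrite -e1 -e2.
Qed.

Lemma mono_letter (y : letter n) : colm (letter_op C y) /\ rowm (letter_op C y).
Proof.
case: y => j /=.
- by split; [apply: colm_cre|apply: rowm_cre].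
- by split; [apply: colm_adj; apply: rowm_cre|apply: rowm_adj; apply: colm_cre].
- split; rewrite /numop.
  + by apply: colm_mul; [apply: colm_cre|apply: colm_adj; apply: rowm_cre].
  + by apply: rowm_mul; [apply: rowm_cre|apply: rowm_adj; apply: colm_cre].
Qed.

Lemma mono_fpath (P : fermpath n) : colm (pathop C P) /\ rowm (pathop C P).
Proof.
case: P => a s; rewrite /pathop /=.
suff [h1 h2] : colm (foldr (fun y M => letter_op C y *m M) 1%:M s) /\
               rowm (foldr (fun y M => letter_op C y *m M) 1%:M s).
  by split; [apply: colm_scale|apply: rowm_scale].
elim: s => [|y s [IH1 IH2]] /=; first by split; [apply: colm1|apply: rowm1].
have [h1 h2] := mono_letter y.
by split; [apply: colm_mul|apply: rowm_mul].
Qed.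

Lemma sqrtC_norm2 (x : C) : sqrtC (`|x| ^+ 2) = `|x|.
Proof. by rewrite sqrCK. Qed.

Lemma colm_vnorm (M : op) s :
  colm M -> \sum_r `|M r s| = vnorm (M *m ket C (enum_val s)).
Proof.
move=> h; rewrite /vnorm.
under [in RHS]eq_bigr => i _ do rewrite mul_ket enum_valK.
case: (pickP (fun r => M r s != 0)) => [r0 hr0|h0]; last first.
  rewrite !big1 ?sqrtC0 // => i _; move/negbT: (h0 i); rewrite negbK => /eqP ->;
  by rewrite normr0 // expr0n.
rewrite (bigD1 r0) //= big1 ?addr0; last first.
  move=> i hi; case: (M i s =P 0) => [->|/eqP hne]; first by rewrite normr0.
  by rewrite (h _ _ _ hne hr0) eqxx in hi.
rewrite [in RHS](bigD1 r0) //= big1 ?addr0 ?sqrtC_norm2 //.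
move=> i hi; case: (M i s =P 0) => [->|/eqP hne]; first by rewrite normr0 expr0n.
by rewrite (h _ _ _ hne hr0) eqxx in hi.
Qed.

Lemma rowm_vnorm (M : op) r :
  rowm M -> \sum_s `|M r s| = vnorm (adj M *m ket C (enum_val r)).
Proof.
move=> h; rewrite -colm_vnorm; last exact: colm_adj.
by apply: eq_bigr => s _; rewrite adjE norm_conjC.
Qed.

End Aux.

Section Exp.
Variable C : numClosedFieldType.
Variable n : nat.
Local Notation op := (op C n).
Variable T : finType.

Definition extf p (x : T) (xs : {ffun 'I_p.+1 -> T}) : {ffun 'I_p.+2 -> T} :=
  [ffun i : 'I_p.+2 => if (i : nat) == p.+1 then x else xs (inord i)].
Definition splitf p (xs : {ffun 'I_p.+2 -> T}) : T * {ffun 'I_p.+1 -> T} :=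
  (xs ord_max, [ffun i : 'I_p.+1 => xs (widen_ord (leqnSn _) i)]).

Lemma extf_inord p x xs q : (q <= p)%N -> @extf p x xs (inord q) = xs (inord q).
Proof.
move=> hq; rewrite ffunE inordK ?ltnS ?(leq_trans hq) //.
by rewrite ifN // neq_ltn ltnS hq.
Qed.

Lemma extf_last p x xs : @extf p x xs (inord p.+1) = x.
Proof. by rewrite ffunE inordK ?eqxx. Qed.

Lemma extf_widen p x xs (i : 'I_p.+1) h : @extf p x xs (widen_ord h i) = xs i.
Proof.
rewrite ffunE /= ifN ?neq_ltn ?ltn_ord //; congr (xs _); apply: val_inj.
by rewrite /= inordK.
Qed.

Lemma extf_max p x xs : @extf p x xs ord_max = x.
Proof. by rewrite ffunE /= eqxx. Qed.

Lemma extf_bij p : bijective (fun u : T * {ffun 'I_p.+1 -> T} => extf u.1 u.2).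
Proof.
exists (@splitf p).
- case=> x xs; rewrite /splitf /= extf_max; congr (_, _).
  by apply/ffunP => i; rewrite ffunE extf_widen.
- move=> xs; apply/ffunP => i; rewrite /splitf ffunE /=.
  case: eqP => [e|ne].
    by congr (xs _); apply: val_inj; rewrite /= e.
  rewrite ffunE; congr (xs _); apply: val_inj; rewrite /= inordK //.
  by have := ltn_ord i; rewrite ltnS leq_eqVlt => /orP [/eqP //|].
Qed.

Lemma comm_sum (I J : finType) (a : I -> op) (b : J -> op) :
  (\sum_i a i) *m (\sum_j b j) - (\sum_j b j) *m (\sum_i a i) =
  \sum_i \sum_j (a i *m b j - b j *m a i).
Proof.
have -> : (\sum_i a i) *m (\sum_j b j) = \sum_i \sum_j a i *m b j.
  by rewrite mulmx_suml; apply: eq_bigr => i _; rewrite mulmx_sumr.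
have -> : (\sum_j b j) *m (\sum_i a i) = \sum_i \sum_j b j *m a i.
  by rewrite mulmx_sumr; apply: eq_bigr => i _; rewrite mulmx_suml.
by rewrite -sumrB; apply: eq_bigr => i _; rewrite sumrB.
Qed.

Lemma nest_expand p (F : nat -> T -> C) (Y : nat -> T -> op) :
  nest_nat (fun q => \sum_x F q x *: Y q x) p =
  \sum_(xs : {ffun 'I_p.+1 -> T})
     (\prod_(i < p.+1) F i (xs i)) *: nest_nat (fun q => Y q (xs (inord q))) p.
Proof.
elim: p => [|p IH].
  rewrite /= (reindex (fun x : T => [ffun _ : 'I_1 => x])) /=; last first.
    exists (fun xs : {ffun 'I_1 -> T} => xs ord0) => [x _|xs _]; first by rewrite ffunE.
    by apply/ffunP => i; rewrite ffunE (ord1 i).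
  by apply: eq_bigr => x _; rewrite big_ord1 !ffunE.
rewrite [LHS]/= IH.
rewrite (reindex (fun u : T * {ffun 'I_p.+1 -> T} => extf u.1 u.2)); last first.
  by apply: onW_bij; apply: extf_bij.
rewrite comm_sum.
rewrite pair_big /=; apply: eq_bigr => [[x xs]] _ /=.
rewrite [in RHS]big_ord_recr /= extf_max extf_last.
under [in RHS]eq_bigr => i _ do rewrite extf_widen.
rewrite (@eq_nest _ _ (fun q => Y q (extf x xs (inord q))) (fun q => Y q (xs (inord q))));
  last by move=> q hq; rewrite extf_inord.
rewrite -!scalemxAl -!scalemxAr !scalerA scalerBr; congr (_ *: _ - _ *: _); exact: mulrC.
Qed.

End Exp.

Section Core.
Variable C : numClosedFieldType.
Variable n : nat.
Local Notation op := (op C n).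
Local Notation vec := (vec C n).
Local Notation conf := (conf n).

Lemma matelE (phi psi : vec) (X : op) :
  matel phi X psi = \sum_r \sum_s (phi r 0)^* * X r s * psi s 0.
Proof.
rewrite /matel mxE exchange_big /=; apply: eq_bigr => s _.
by rewrite mxE big_distrl /=; apply: eq_bigr => r _; rewrite adjE.
Qed.

Lemma amgm (x y : C) : 0 <= x -> 0 <= y -> x * y <= 2^-1 * (x ^+ 2 + y ^+ 2).
Proof.
move=> hx hy.
have hr : x - y \is Num.real by rewrite rpredB // ger0_real.
have h0 : 0 <= (x - y) ^+ 2 by rewrite -real_normK // exprn_ge0.
have e : x ^+ 2 + y ^+ 2 = (x - y) ^+ 2 + 2 * (x * y).
  by ring.
rewrite e mulrDr.
have -> : 2^-1 * (2 * (x * y)) = x * y by rewrite mulKf // pnatr_eq0.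
by rewrite lerDr mulr_ge0 // invr_ge0 ler0n.
Qed.

Lemma estate_sum eta (phi : vec) : estate eta phi -> \sum_r `|phi r 0| ^+ 2 = 1.
Proof. by move=> [_ h]; move: h; rewrite /vnorm => h; rewrite -[LHS]sqrtCK h expr1n. Qed.

Lemma half_double (x : C) : 2^-1 * (x + x) = x.
Proof. by field. Qed.

Lemma two_half (x : C) : 2 * (2^-1 * x) = x.
Proof. by field. Qed.

Lemma core (X : op) (sg : C) (I : finType) (S : pred I) (w : I -> C)
  (J : Type) (Ps : I -> seq J) (f : J -> op) (W Mx : C) eta (phi psi : vec) :
  `|sg| = 1 ->
  adj X = sg *: X ->
  X = \sum_(i | S i) w i *: \sum_(j <- Ps i) f j ->
  0 <= W ->
  (forall i, S i -> `|w i| <= W) ->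
  (forall j, colm (f j) /\ rowm (f j)) ->
  estate eta phi -> estate eta psi ->
  (forall c : conf, nelec c = eta ->
     \sum_(i | S i) \sum_(j <- Ps i)
        2^-1 * (vnorm (f j *m ket C c) + vnorm (adj (f j) *m ket C c)) <= Mx) ->
  `|matel phi X psi| <= W * Mx.
Proof.
move=> hs hadj hX hW hw hf hphi hpsi hdeg.
pose a r := `|phi r 0|. pose b r := `|psi r 0|.
pose L r s := \sum_(i | S i) \sum_(j <- Ps i) `|f j r s|.
pose K r s := L r s + L s r.
have hL0 r s : 0 <= L r s by apply: sumr_ge0 => i _; apply: sumr_ge0 => j _.
have hXL r s : `|X r s| <= W * L r s.
  rewrite hX summxE (le_trans (ler_norm_sum _ _ _)) // /L mulr_sumr.
  apply: ler_sum => i hi; rewrite mxE normrM summxE.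
  apply: ler_pM => //; first exact: hw.
  exact: (le_trans (ler_norm_sum _ _ _)).
have hsym r t : `|X r t| = `|X t r|.
  have := congr1 (fun M : op => M t r) hadj; rewrite adjE mxE => e.
  by rewrite -norm_conjC e normrM hs mul1r.
have hK0 r t : 0 <= K r t by rewrite addr_ge0.
have hXK r t : `|X r t| <= 2^-1 * (W * K r t).
  rewrite -[`|X r t|]half_double {2}(hsym r t) ler_pM2l ?invr_gt0 ?ltr0n //.
  by rewrite /K mulrDr lerD.
have ha r : 0 <= a r by apply: normr_ge0.
have hb r : 0 <= b r by apply: normr_ge0.
rewrite matelE.
apply: (le_trans (ler_norm_sum _ _ _)).
apply: (@le_trans _ _ (\sum_r \sum_t a r * (2^-1 * (W * K r t)) * b t)).
  apply: ler_sum => r _; apply: (le_trans (ler_norm_sum _ _ _)); apply: ler_sum => t _.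
  rewrite !normrM norm_conjC; apply: ler_wpM2r => //; apply: ler_wpM2l => //.
pose c := 2^-1 * W.
have hc : 0 <= c by rewrite mulr_ge0 // invr_ge0 ler0n.
apply: (@le_trans _ _ (\sum_r \sum_t c * (2^-1 * (K r t * a r ^+ 2 + K r t * b t ^+ 2)))).
  apply: ler_sum => r _; apply: ler_sum => t _.
  have -> : a r * (2^-1 * (W * K r t)) * b t = c * (K r t * (a r * b t)) by rewrite /c; ring.
  apply: ler_wpM2l => //.
  have -> : 2^-1 * (K r t * a r ^+ 2 + K r t * b t ^+ 2) = K r t * (2^-1 * (a r ^+ 2 + b t ^+ 2)) by ring.
  by apply: ler_wpM2l => //; apply: amgm.
pose deg (c : conf) := \sum_(i | S i) \sum_(j <- Ps i)
        2^-1 * (vnorm (f j *m ket C c) + vnorm (adj (f j) *m ket C c)).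
have hD r : \sum_t K r t = 2 * deg (enum_val r).
  rewrite /K big_split /= /L.
  rewrite exchange_big [X in _ + X]exchange_big /=.
  rewrite -big_split /= /deg mulr_sumr; apply: eq_bigr => i _.
  rewrite exchange_big [X in _ + X]exchange_big -big_split /= mulr_sumr.
  apply: eq_bigr => j _; rewrite two_half addrC.
  have [h1 h2] := hf j.
  by rewrite (colm_vnorm r h1) (rowm_vnorm r h2).
have hKs r t : K r t = K t r by rewrite /K addrC.
have hsum : \sum_r \sum_t c * (2^-1 * (K r t * a r ^+ 2 + K r t * b t ^+ 2)) =
    c * (2^-1 * (\sum_r a r ^+ 2 * (2 * deg (enum_val r)) +
                 \sum_r b r ^+ 2 * (2 * deg (enum_val r)))).

  have e1 : \sum_r \sum_t K r t * a r ^+ 2 = \sum_r a r ^+ 2 * (2 * deg (enum_val r)).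
    apply: eq_bigr => r _; rewrite -hD mulr_sumr; apply: eq_bigr => t _; exact: mulrC.
  have e2 : \sum_r \sum_t K r t * b t ^+ 2 = \sum_r b r ^+ 2 * (2 * deg (enum_val r)).
    rewrite exchange_big; apply: eq_bigr => t _; rewrite -hD mulr_sumr.
    by apply: eq_bigr => r _; rewrite hKs mulrC.
  transitivity (c * 2^-1 * (\sum_r \sum_t K r t * a r ^+ 2 + \sum_r \sum_t K r t * b t ^+ 2)).
    rewrite mulrDr !mulr_sumr -big_split /=; apply: eq_bigr => r _.
    by rewrite !mulr_sumr -big_split /=; apply: eq_bigr => t _; ring.
  by rewrite e1 e2 mulrA.
rewrite hsum.
have hbnd (v : vec) : estate eta v ->
    \sum_r `|v r 0| ^+ 2 * (2 * deg (enum_val r)) <= 2 * Mx.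
  move=> hv; apply: (@le_trans _ _ (\sum_r `|v r 0| ^+ 2 * (2 * Mx))); last first.
    by rewrite -mulr_suml (estate_sum hv) mul1r.
  apply: ler_sum => r _; case: (eqVneq (nelec (enum_val r)) eta) => [e|ne].
    apply: ler_wpM2l; first by apply: exprn_ge0.
    by rewrite ler_pM2l ?ltr0n // /deg; apply: hdeg.
  by rewrite (hv.1 r ne) normr0 expr0n /= !mul0r.
apply: (@le_trans _ _ (c * (2^-1 * (2 * Mx + 2 * Mx)))).
  apply: ler_wpM2l => //; rewrite ler_pM2l ?invr_gt0 ?ltr0n //.
  by apply: lerD; apply: hbnd.
have -> : c * (2^-1 * (2 * Mx + 2 * Mx)) = W * Mx by rewrite /c; field.
by [].
Qed.
End Core.

Section Fin.
Variable C : numClosedFieldType.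

Lemma max_ge0 (x y : C) : 0 <= x -> 0 <= y ->
  [/\ 0 <= Num.max x y, x <= Num.max x y & y <= Num.max x y].
Proof.
move=> hx hy; have cxy : (x >=< y)%O by apply: real_comparable; apply: ger0_real.
by rewrite !comparable_le_max // hx !lexx ?orbT.
Qed.

Lemma bigmax_ge0 (I : Type) (r : seq I) (P : pred I) (F : I -> C) :
  (forall i, P i -> 0 <= F i) -> 0 <= \big[Num.max/0]_(i <- r | P i) F i.
Proof.
move=> h; apply: (big_ind (fun x : C => 0 <= x)) => //.
by move=> x y hx hy; have [] := max_ge0 hx hy.
Qed.

Lemma bigmax_ge_seq (I : eqType) (r : seq I) (P : pred I) (F : I -> C) i0 :
  (forall i, P i -> 0 <= F i) -> i0 \in r -> P i0 ->
  F i0 <= \big[Num.max/0]_(i <- r | P i) F i.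
Proof.
move=> h; elim: r => [|x r IH] //; rewrite big_cons in_cons => /orP [/eqP ->|hin] hi0.
  by rewrite hi0; have [] := max_ge0 (h _ hi0) (bigmax_ge0 r h).
case: ifP => hPx; last exact: IH.
have [_ _ h3] := max_ge0 (h _ hPx) (bigmax_ge0 r h).
exact: le_trans (IH hin hi0) h3.
Qed.

Lemma bigmax_ge (I : finType) (P : pred I) (F : I -> C) i0 :
  (forall i, P i -> 0 <= F i) -> P i0 -> F i0 <= \big[Num.max/0]_(i | P i) F i.
Proof. by move=> h hi0; apply: bigmax_ge_seq => //; rewrite mem_index_enum. Qed.

Lemma maxnorm_ge0 m1 m2 (A : 'M[C]_(m1, m2)) : 0 <= maxnorm A.
Proof. by apply: bigmax_ge0 => i _; apply: bigmax_ge0 => j _. Qed.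

Lemma maxnorm_ge m1 m2 (A : 'M[C]_(m1, m2)) i j : `|A i j| <= maxnorm A.
Proof.
apply: (@le_trans _ _ (\big[Num.max/0]_(j < m2) `|A i j|)).
  by apply: bigmax_ge.
by apply: (bigmax_ge (F := fun i => \big[Num.max/0]_(j < m2) `|A i j|)) => // k _;
   apply: bigmax_ge0.
Qed.

Lemma subn_of (a b N : nat) : N = (a + b)%N -> (N - a = b)%N.
Proof. by move=> ->; rewrite addKn. Qed.

Lemma prod_if p (g : {ffun 'I_p.+1 -> bool}) (a b : C) :
  \prod_(i < p.+1) (if g i then a else b) =
  a ^+ (\sum_q (g q : nat))%N * b ^+ (p.+1 - \sum_q (g q : nat))%N.
Proof.
have e : (p.+1 - \sum_q (g q : nat) = \sum_q (~~ g q : nat))%N.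
  have : (\sum_(q < p.+1) 1 = \sum_q (g q : nat) + \sum_q (~~ g q : nat))%N.
    by rewrite -big_split /=; apply: eq_bigr => q _; case: (g q).
  have h1 : (\sum_(q < p.+1) 1 = p.+1)%N by rewrite sum1_card card_ord.
  by move=> e2; apply: subn_of (etrans (esym h1) e2).
rewrite e -!prodrXr -big_split /=; apply: eq_bigr => q _.
by case: (g q); rewrite /= ?expr1 ?expr0 ?mulr1 ?mul1r.
Qed.

End Fin.

Unset Implicit Arguments.

Theorem proposition11 (C : numClosedFieldType) (n p : nat)
  (tau nu : 'M[C]_n) (gamma : {ffun 'I_p.+1 -> bool})
  (E : {ffun 'I_p.+1 -> ('I_n * 'I_n)%type} -> seq (fermpath n)) (eta : nat) :
  adj (Tham tau) = Tham tau ->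
  adj (Vham nu) = Vham nu ->
  (forall js : {ffun 'I_p.+1 -> ('I_n * 'I_n)%type},
      \sum_(P <- E js) pathop C P = nestc (fun q => Hjk C (gamma q) (js q))) ->
  (eta <= n)%N ->
  forall phi psi : vec C n, estate eta phi -> estate eta psi ->
  `|matel phi (nestc (fun q => Hop tau nu (gamma q))) psi|
    <= maxnorm tau ^+ (\sum_q (gamma q : nat))%N
       * maxnorm nu ^+ (p.+1 - \sum_q (gamma q : nat))%N
       * \big[Num.max/0]_(c : conf n | nelec c == eta) degc tau nu gamma E c.
Proof.
move=> hT hV hE _ phi psi hphi hpsi.
pose S := fun js : {ffun 'I_p.+1 -> ('I_n * 'I_n)%type} =>
  [forall q, mu tau nu (gamma q) (js q).1 (js q).2 != 0].
pose w := fun js : {ffun 'I_p.+1 -> ('I_n * 'I_n)%type} =>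
  \prod_(i < p.+1) mu tau nu (gamma i) (js i).1 (js i).2.
have hHop g : Hop tau nu g = \sum_(x : 'I_n * 'I_n) mu tau nu g x.1 x.2 *: Hjk C g x.
  rewrite -(pair_bigA _ (fun j k => mu tau nu g j k *: Hjk C g (j, k))) /=.
  by case: g.
set X := nestc _.
have hX : X = \sum_(js | S js) w js *: \sum_(P <- E js) pathop C P.
  rewrite /X /nestc.
  rewrite (@eq_nest _ _ _ (fun q => \sum_x mu tau nu (gamma (inord q)) x.1 x.2 *:
                                   Hjk C (gamma (inord q)) x)); last by move=> q _; rewrite hHop.
  rewrite nest_expand (bigID S) /= [X in _ + X]big1 ?addr0; last first.
    move=> js /forallPn [q /negPn /eqP hq].
    by rewrite (bigD1 q) //= inord_val hq mul0r scale0r.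
  apply: eq_bigr => js _; rewrite hE /w; congr (_ *: _).
  by apply: eq_bigr => i _; rewrite inord_val.
have hadj : adj X = (-1) ^+ p *: X.
  by apply: nest_adj => q; case: (gamma (inord q)).
apply: (core (sg := (-1) ^+ p) (S := S) (w := w) (Ps := E) (f := @pathop C n) _ hadj hX
              _ _ _ hphi hpsi).
- by rewrite normrX normrN1 expr1n.
- by rewrite mulr_ge0 // exprn_ge0 // maxnorm_ge0.
- move=> js _; rewrite /w normr_prod -prod_if; apply: ler_prod => i _.
  rewrite normr_ge0 /=; case: (gamma i); exact: maxnorm_ge.
- by move=> j; apply: (mono_fpath C j).
- move=> c hc; apply: (bigmax_ge (F := fun c => degc tau nu gamma E c)); last by rewrite hc.
  move=> c' _; rewrite /degc; apply: sumr_ge0 => js _; apply: sumr_ge0 => P _.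
  by rewrite mulr_ge0 ?invr_ge0 ?ler0n // addr_ge0 // sqrtC_ge0 sumr_ge0 // => i _;
     rewrite exprn_ge0.
Qed.
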